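(* Let $p,q$ be nonnegative integers, $a_1,\dots,a_p,b_1,\dots,b_q,d,e,f$ complex parameters and $x,y$ complex variables such that all series involved converge and all terms are defined. Then $$\sum_{n\ge0}\frac{(a_1)_n\cdots(a_p)_n(d)_n\,x^ny^n}{(b_1)_n\cdots(b_q)_n\,n!}\,{}_2F_2\!\left[\begin{matrix}d+n,\ e+2\\ f+1,\ e\end{matrix};x\right]=\sum_{n\ge0}\frac{(d)_n(e+2)_n\,x^n}{(f+1)_n(e)_n\,n!}\,{}_{p+3}F_{q+1}\!\left[\begin{matrix}-n,\ 1-e-n,\ -f-n,\ a_1,\dots,a_p\\ -1-e-n,\ b_1,\dots,b_q\end{matrix};y\right].$$
   Context: $(a)_k=a(a+1)\cdots(a+k-1)$ (with $(a)_0=1$) is the Pochhammer symbol. The generalized hypergeometric series is ${}_pF_q\!\left[\begin{matrix}a_1,\dots,a_p\\ b_1,\dots,b_q\end{matrix};z\right]=\sum_{k\ge0}\frac{(a_1)_k\cdots(a_p)_k}{(b_1)_k\cdots(b_q)_k}\frac{z^k}{k!}$; with a numerator parameter $-n$ ($n$ a nonnegative integer) it terminates after the $k=n$ term. *)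

(* Defs.v *)
From Stdlib Require Import Reals List Factorial.
From Coquelicot Require Import Coquelicot.
Open Scope C_scope.

Fixpoint poch (a : C) (k : nat) : C :=
  match k with
  | O => 1
  | S k' => poch a k' * (a + RtoC (INR k'))
  end.

Definition poch_prod (l : list C) (k : nat) : C :=
  fold_right (fun a acc => poch a k * acc) 1 l.

(* sum of a complex series (componentwise real Series; meaningful when it converges) *)
Definition CSeries (u : nat -> C) : C :=
  (Series (fun n => Re (u n)), Series (fun n => Im (u n))).

Definition hyp_term (num den : list C) (z : C) (k : nat) : C :=
  poch_prod num k / poch_prod den k * Cpow z k / RtoC (INR (fact k)).

(* generalized hypergeometric series pFq[num; den; z], p = length num, q = length den *)
Definition hypF (num den : list C) (z : C) : C := CSeries (hyp_term num den z).

Definition lhs_coef (a b : list C) (d x y : C) (n : nat) : C :=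
  poch_prod a n * poch d n * Cpow x n * Cpow y n
    / (poch_prod b n * RtoC (INR (fact n))).

Definition lhs_num (d e : C) (n : nat) : list C := (d + RtoC (INR n)) :: (e + 2) :: nil.
Definition lhs_den (e f : C) : list C := (f + 1) :: e :: nil.

Definition lhs_term (a b : list C) (d e f x y : C) (n : nat) : C :=
  lhs_coef a b d x y n * hypF (lhs_num d e n) (lhs_den e f) x.

Definition rhs_num (a : list C) (e f : C) (n : nat) : list C :=
  (- RtoC (INR n)) :: (1 - e - RtoC (INR n)) :: (- f - RtoC (INR n)) :: a.
Definition rhs_den (b : list C) (e : C) (n : nat) : list C :=
  (-1 - e - RtoC (INR n)) :: b.

Definition rhs_term (a b : list C) (d e f x y : C) (n : nat) : C :=
  poch d n * poch (e + 2) n * Cpow x n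
    / (poch (f + 1) n * poch e n * RtoC (INR (fact n)))
  * hypF (rhs_num a e f n) (rhs_den b e n) y.

(* the double array of the LHS: n-th outer, k-th inner term *)
Definition lhs_double (a b : list C) (d e f x y : C) (n k : nat) : C :=
  lhs_coef a b d x y n * hyp_term (lhs_num d e n) (lhs_den e f) x k.

(* Main.v *)
Require Import Defs.
From Stdlib Require Import Reals List Lia Lra Factorial.
From Coquelicot Require Import Coquelicot.
Open Scope R_scope.

Lemma sumR_S (f : nat -> R) n : sum_n f (S n) = sum_n f n + f (S n).
Proof. rewrite sum_Sn. reflexivity. Qed.

Lemma sum_n_le_loc (f g : nat -> R) N :
  (forall i, (i <= N)%nat -> f i <= g i) -> sum_n f N <= sum_n g N.
Proof.
  induction N as [|N IH]; intros H.
  - rewrite !sum_O. apply H; lia.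
  - rewrite !sumR_S. apply Rplus_le_compat; [apply IH; intros; apply H; lia | apply H; lia].
Qed.

Lemma sum_n_nonneg (f : nat -> R) N : (forall i, 0 <= f i) -> 0 <= sum_n f N.
Proof.
  intros H; induction N as [|N IH]; [rewrite sum_O; auto | rewrite sumR_S; specialize (H (S N)); lra].
Qed.

Lemma sum_n_mono_N (f : nat -> R) N j : (forall i, 0 <= f i) -> sum_n f N <= sum_n f (N + j).
Proof.
  intros H; induction j as [|j IH]; [rewrite Nat.add_0_r; lra|].
  rewrite Nat.add_succ_r, sumR_S. specialize (H (S (N + j))). lra.
Qed.

Lemma is_series_lim (f : nat -> R) l : is_series f l <-> is_lim_seq (sum_n f) l.
Proof. split; intros H; exact H. Qed.

Lemma partial_le_lim (f : nat -> R) l N : (forall i, 0 <= f i) -> is_series f l -> sum_n f N <= l.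
Proof.
  intros Hp Hs. assert (Hs' : is_lim_seq (sum_n f) l) by exact Hs. clear Hs.
  apply (is_lim_seq_incr_n _ N) in Hs'. rename Hs' into Hs.
  assert (H := is_lim_seq_le (fun _ => sum_n f N) (fun n => sum_n f (n + N)) (sum_n f N) l).
  simpl in H. apply H; [|apply is_lim_seq_const|exact Hs].
  intros n. rewrite Nat.add_comm. apply sum_n_mono_N; auto.
Qed.

Lemma partial_le_Series (f : nat -> R) N : (forall i, 0 <= f i) -> ex_series f -> sum_n f N <= Series f.
Proof. intros Hp Hs. apply partial_le_lim; auto. apply Series_correct; auto. Qed.

Lemma Series_nonneg (f : nat -> R) : (forall i, 0 <= f i) -> ex_series f -> 0 <= Series f.
Proof.
  intros H He. apply Rle_trans with (sum_n f 0); [rewrite sum_O; auto|]. apply partial_le_Series; auto.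
Qed.

Lemma sumR_plus (f g : nat -> R) n : sum_n (fun k => f k + g k) n = sum_n f n + sum_n g n.
Proof. exact (sum_n_plus f g n). Qed.

Lemma tri (a : nat -> nat -> R) M :
  sum_n (fun m => sum_n (fun i => a i (m - i)%nat) m) M = sum_n (fun i => sum_n (a i) (M - i)%nat) M.
Proof.
  induction M as [|M IH].
  - rewrite !sum_O; cbv beta. simpl. reflexivity.
  - rewrite sumR_S, IH, sumR_S. rewrite (sumR_S (fun i => sum_n (a i) (S M - i)%nat)).
    replace (S M - S M)%nat with 0%nat by lia. rewrite sum_O.
    rewrite (sum_n_ext_loc (fun i => sum_n (a i) (S M - i)%nat) (fun i => sum_n (a i) (M - i)%nat + a i (S M - i)%nat)).
    + rewrite sumR_plus. lra.
    + intros i Hi. replace (S M - i)%nat with (S (M - i)) by lia. rewrite sumR_S. reflexivity.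
Qed.

Lemma lim_fin_sum (u : nat -> nat -> R) (l : nat -> R) N :
  (forall i, is_lim_seq (u i) (l i)) ->
  is_lim_seq (fun K => sum_n (fun i => u i K) N) (sum_n l N).
Proof.
  intros H. induction N as [|N IH].
  - rewrite sum_O. eapply is_lim_seq_ext; [|apply (H 0%nat)]. intros; rewrite sum_O; auto.
  - rewrite sumR_S. eapply is_lim_seq_ext; [|apply (is_lim_seq_plus' _ _ _ _ IH (H (S N)))].
    intros; simpl. rewrite sumR_S. reflexivity.
Qed.

Lemma diag_pos (a : nat -> nat -> R) :
  (forall n k, 0 <= a n k) ->
  (forall n, ex_series (a n)) ->
  ex_series (fun n => Series (a n)) ->
  is_series (fun m => sum_n (fun i => a i (m - i)%nat) m) (Series (fun n => Series (a n))).
Proof.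
  intros Hp H1 H2.
  set (D := fun m => sum_n (fun i => a i (m - i)%nat) m).
  set (S0 := Series (fun n => Series (a n))).
  assert (HD : forall m, 0 <= D m) by (intros; apply sum_n_nonneg; auto).
  assert (HR : forall n, 0 <= Series (a n)) by (intros; apply Series_nonneg; auto).
  assert (Hup : forall M, sum_n D M <= S0).
  { intros M. unfold D. rewrite tri.
    apply Rle_trans with (sum_n (fun i => Series (a i)) M).
    - apply sum_n_le_loc. intros; apply partial_le_Series; auto.
    - apply partial_le_Series; auto. }
  destruct (ex_finite_lim_seq_incr (sum_n D) S0) as [L HL].
  { intros n. rewrite sumR_S. specialize (HD (S n)). lra. }
  { exact Hup. }
  assert (HLs : is_series D L) by exact HL.
  assert (HPL : forall M, sum_n D M <= L) by (intros; apply partial_le_lim; auto).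
  assert (E1 : L <= S0).
  { assert (H := is_lim_seq_le (sum_n D) (fun _ => S0) L S0 Hup HL (is_lim_seq_const _)). exact H. }
  assert (E2 : S0 <= L).
  { assert (HQ : forall N, sum_n (fun i => Series (a i)) N <= L).
    { intros N.
      assert (Hlim := lim_fin_sum (fun i K => sum_n (a i) K) (fun i => Series (a i)) N
                         (fun i => Series_correct _ (H1 i))).
      assert (Hb : forall K, sum_n (fun i => sum_n (a i) K) N <= L).
      { intros K.
      apply Rle_trans with (sum_n D (N + K)); [|apply HPL].
      unfold D. rewrite tri.
      apply Rle_trans with (sum_n (fun i => sum_n (a i) (N + K - i)%nat) N).
      - apply sum_n_le_loc. intros i Hi.
        replace (N + K - i)%nat with (K + (N - i))%nat by lia. apply sum_n_mono_N; auto.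
      - apply sum_n_mono_N. intros; apply sum_n_nonneg; auto. }
      assert (H := is_lim_seq_le _ (fun _ => L) _ L Hb Hlim (is_lim_seq_const _)). exact H. }
    assert (H2' := Series_correct _ H2).
    assert (H := is_lim_seq_le _ (fun _ => L) S0 L HQ H2' (is_lim_seq_const _)). exact H. }
  replace S0 with L by lra. exact HLs.
Qed.

Lemma normR (x : R) : norm x = Rabs x.
Proof. reflexivity. Qed.

Lemma ex_series_abs (f : nat -> R) : ex_series (fun k => Rabs (f k)) -> ex_series f.
Proof. intros H. apply (ex_series_le f (fun k => Rabs (f k))); auto. intros; rewrite normR; lra. Qed.

Lemma sumR_minus (f g : nat -> R) n : sum_n (fun k => f k - g k) n = sum_n f n - sum_n g n.
Proof.
  induction n as [|n IH]; [rewrite !sum_O; auto|]. rewrite !sumR_S, IH. lra.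
Qed.

Lemma diag_gen (a : nat -> nat -> R) :
  (forall n, ex_series (fun k => Rabs (a n k))) ->
  ex_series (fun n => Series (fun k => Rabs (a n k))) ->
  Series (fun n => Series (a n)) = Series (fun m => sum_n (fun i => a i (m - i)%nat) m).
Proof.
  intros H1 H2.
  set (b := fun n k => Rabs (a n k)). set (c := fun n k => Rabs (a n k) + a n k).
  assert (Ha : forall n, ex_series (a n)) by (intros; apply ex_series_abs; auto).
  assert (Hc : forall n, ex_series (c n)) by (intros; apply (ex_series_plus (fun k => Rabs (a n k)) (a n)); auto).
  assert (Hcb : forall n k, 0 <= c n k <= 2 * b n k).
  { intros; unfold b, c. split; [|]; destruct (Rabs_pos (a n k)); split_Rabs; lra. }
  assert (Hc2 : ex_series (fun n => Series (c n))).
  { apply (ex_series_le (fun n => Series (c n)) (fun n => 2 * Series (b n))).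
    - intros n. rewrite normR. rewrite Rabs_pos_eq.
      + rewrite <- Series_scal_l. apply Series_le; [intros; apply Hcb|].
        apply (ex_series_scal_l 2 (b n)); apply H1.
      + apply Series_nonneg; [intros; apply Hcb|apply Hc].
    - apply (ex_series_scal_l 2 (fun n => Series (b n))); apply H2. }
  assert (Pb := diag_pos b ltac:(intros; apply Rabs_pos) H1 H2).
  assert (Pc := diag_pos c ltac:(intros; apply Hcb) Hc Hc2).
  assert (E : forall n, Series (a n) = Series (c n) - Series (b n)).
  { intros n. rewrite <- Series_minus by (first [apply Hc | apply H1]). apply Series_ext. intros; unfold b, c; lra. }
  rewrite (Series_ext _ _ E). rewrite Series_minus by (first [exact Hc2 | exact H2]).
  symmetry. apply is_series_unique.
  assert (Pm := is_series_minus _ _ _ _ Pc Pb).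
  eapply is_series_ext; [|exact Pm]. intros m. simpl.
  change (sum_n (fun i => c i (m - i)%nat) m - sum_n (fun i => b i (m - i)%nat) m = sum_n (fun i => a i (m - i)%nat) m).
  rewrite <- sumR_minus. apply sum_n_ext. intros; unfold b, c; lra.
Qed.

Open Scope C_scope.


Lemma INRC_plus (n k : nat) : RtoC (INR (n + k)%nat) = RtoC (INR n) + RtoC (INR k).
Proof. rewrite plus_INR, RtoC_plus. reflexivity. Qed.

Lemma INRC_S (n : nat) : RtoC (INR (S n)) = RtoC (INR n) + 1.
Proof. rewrite S_INR, RtoC_plus. reflexivity. Qed.

Lemma poch_add (d : C) (n k : nat) : poch d n * poch (d + RtoC (INR n)) k = poch d (n + k)%nat.
Proof.
  induction k as [|k IH]; simpl.
  - rewrite Nat.add_0_r. ring.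
  - rewrite Nat.add_succ_r. simpl. rewrite <- IH, INRC_plus. ring.
Qed.

Lemma poch_S_l (a : C) (n : nat) : poch a (S n) = a * poch (a + 1) n.
Proof.
  revert a; induction n as [|n IH]; intros a; simpl.
  - ring.
  - change (poch a (S n) * (a + RtoC (INR (S n))) = a * (poch (a + 1) n * (a + 1 + RtoC (INR n)))).
    rewrite IH, INRC_S. ring.
Qed.

Lemma poch_refl (x : C) (n : nat) : poch x n = Cpow (-1) n * poch (1 - x - RtoC (INR n)) n.
Proof.
  induction n as [|n IH].
  - simpl. ring.
  - change (poch x n * (x + RtoC (INR n)) = Cpow (-1) (S n) * poch (1 - x - RtoC (INR (S n))) (S n)).
    rewrite poch_S_l, IH.
    replace (1 - x - RtoC (INR (S n)) + 1) with (1 - x - RtoC (INR n)) by (rewrite INRC_S; ring).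
    rewrite INRC_S. simpl. ring.
Qed.

Lemma poch_split (c z : C) (n k : nat) :
  z = 1 - c - RtoC (INR (n + k)%nat) ->
  poch c (n + k)%nat = poch c k * Cpow (-1) n * poch z n.
Proof.
  intros Hz. rewrite Nat.add_comm, <- poch_add, (poch_refl (c + RtoC (INR k)) n).
  replace (1 - (c + RtoC (INR k)) - RtoC (INR n)) with z by (rewrite Hz, INRC_plus; ring).
  ring.
Qed.

Lemma fact_poch (m : nat) : RtoC (INR (fact m)) = poch 1 m.
Proof.
  induction m as [|m IH]; [reflexivity|].
  rewrite fact_simpl, mult_INR, RtoC_mult, INRC_S. simpl poch. rewrite <- IH. ring.
Qed.

Lemma Cpow_add (x : C) (n k : nat) : Cpow x (n + k)%nat = Cpow x n * Cpow x k.
Proof. induction n as [|n IH]; simpl; [ring| rewrite IH; ring]. Qed.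

Lemma poch_negm_zero (m n : nat) : (m < n)%nat -> poch (- RtoC (INR m)) n = 0.
Proof.
  induction n as [|n IH]; intros H; [lia|].
  simpl. destruct (Nat.eq_dec n m) as [->|Hne].
  - ring.
  - rewrite IH by lia. ring.
Qed.

Lemma RtoC_neq0 (r : R) : r <> 0%R -> RtoC r <> 0.
Proof. intros H E. apply H. injection E. auto. Qed.

Lemma Cpow_m1_nz (n : nat) : Cpow (-1) n <> 0.
Proof. apply Cpow_nz. intros E. injection E. intros. lra. Qed.

Lemma key (PA PB D Dk E2 F E K1 s Q1 Q2 Q3 Q4 xn xk yn nf : C) :
  PB <> 0 -> nf <> 0 -> F <> 0 -> E <> 0 -> K1 <> 0 -> s <> 0 -> Q1 <> 0 -> Q2 <> 0 -> Q3 <> 0 -> Q4 <> 0 ->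
  s * s = 1 ->
  PA*D*xn*yn/(PB*nf) * (Dk*(E2*1)/(F*(E*1))*xk/K1) =
  D*Dk*(E2*s*Q1)*(xn*xk)/((F*s*Q2)*(E*s*Q3)*(K1*s*Q4)) * (Q4*(Q3*(Q2*PA))/(Q1*PB)*yn/nf).
Proof.
  intros. 
  transitivity (PA*D*xn*yn/(PB*nf) * (Dk*(E2*1)/(F*(E*1))*xk/K1) / (s * s)).
  - rewrite H9. field. repeat split; auto. 
  - field. repeat split; auto.
Qed.

Definition rcoef (d e f x : C) (m : nat) : C :=
  poch d m * poch (e + 2) m * Cpow x m / (poch (f + 1) m * poch e m * RtoC (INR (fact m))).

Lemma prod_nz_r (u v w : C) : u * v * w <> 0 -> w <> 0.
Proof. intros H E; apply H; rewrite E; ring. Qed.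
Lemma prod_nz_m (u v w : C) : u * v * w <> 0 -> u <> 0.
Proof. intros H E; apply H; rewrite E; ring. Qed.

Lemma term_id (a b : list C) (d e f x y : C) (n k : nat) :
  poch_prod b n <> 0 ->
  (forall k : nat, poch (f + 1) k <> 0) ->
  (forall k : nat, poch e k <> 0) ->
  poch (-1 - e - RtoC (INR (n + k)%nat)) n <> 0 ->
  lhs_double a b d e f x y n k =
  rcoef d e f x (n + k)%nat * hyp_term (rhs_num a e f (n + k)%nat) (rhs_den b e (n + k)%nat) y n.
Proof.
  intros Hb Hf He Hq.
  assert (HF := Hf (n + k)%nat). assert (HE := He (n + k)%nat).
  assert (HM := INR_fact_neq_0 (n + k)%nat). apply RtoC_neq0 in HM.
  assert (Hn := INR_fact_neq_0 n). apply RtoC_neq0 in Hn.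
  assert (Hk := INR_fact_neq_0 k). apply RtoC_neq0 in Hk.
  rewrite (poch_split (f + 1) (- f - RtoC (INR (n + k)%nat)) n k) in HF by ring.
  rewrite (poch_split e (1 - e - RtoC (INR (n + k)%nat)) n k) in HE by ring.
  rewrite fact_poch in HM, Hk.
  rewrite (poch_split 1 (- RtoC (INR (n + k)%nat)) n k) in HM by ring.
  unfold lhs_double, lhs_coef, hyp_term, lhs_num, lhs_den, rhs_num, rhs_den, rcoef.
  cbn [poch_prod fold_right].
  rewrite <- (poch_add d n k).
  rewrite (poch_split (e + 2) (-1 - e - RtoC (INR (n + k)%nat)) n k) by ring.
  rewrite (poch_split (f + 1) (- f - RtoC (INR (n + k)%nat)) n k) by ring.
  rewrite (poch_split e (1 - e - RtoC (INR (n + k)%nat)) n k) by ring.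
  rewrite !fact_poch.
  rewrite (poch_split 1 (- RtoC (INR (n + k)%nat)) n k) by ring.
  rewrite Cpow_add.
  rewrite <- fact_poch in Hk |- *.
  assert (H1 := prod_nz_r _ _ _ HF). assert (H2 := prod_nz_r _ _ _ HE). assert (H3 := prod_nz_r _ _ _ HM).
  assert (H4 := prod_nz_m _ _ _ HF). assert (H5 := prod_nz_m _ _ _ HE).
  assert (Hs := Cpow_m1_nz n).
  rewrite fact_poch in Hk.
  set (s := Cpow (-1) n) in *. set (xn := Cpow x n) in *. set (xk := Cpow x k) in *. set (yn := Cpow y n) in *.
  change (fold_right (fun a0 acc : C => poch a0 n * acc) 1 a) with (poch_prod a n).
  change (fold_right (fun a0 acc : C => poch a0 n * acc) 1 b) with (poch_prod b n).
  assert (Hss : s * s = 1) by (unfold s; clear; induction n as [|n IH]; simpl; [ring| rewrite <- IH; ring]).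
  clearbody s xn xk yn.
  apply key; assumption.
Qed.


Lemma im_le_Cmod (c : C) : Rabs (Im c) <= Cmod c.
Proof.
  destruct c as [u v]. unfold Cmod, Im; simpl.
  rewrite <- sqrt_Rsqr_abs. apply sqrt_le_1_alt. unfold Rsqr. nra.
Qed.

Lemma CS_mul_re (c : C) (t : nat -> C) :
  ex_series (fun k => Re (t k)) -> ex_series (fun k => Im (t k)) ->
  Re (c * CSeries t) = Series (fun k => Re (c * t k)).
Proof.
  intros H1 H2. destruct c as [c1 c2]. unfold CSeries, Re, Im in *. simpl.
  rewrite <- !Series_scal_l, <- Series_minus.
  - apply Series_ext. intros; reflexivity.
  - apply (ex_series_scal_l c1 (fun k => fst (t k))); auto.
  - apply (ex_series_scal_l c2 (fun k => snd (t k))); auto.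
Qed.

Lemma CS_mul_im (c : C) (t : nat -> C) :
  ex_series (fun k => Re (t k)) -> ex_series (fun k => Im (t k)) ->
  Im (c * CSeries t) = Series (fun k => Im (c * t k)).
Proof.
  intros H1 H2. destruct c as [c1 c2]. unfold CSeries, Re, Im in *. simpl.
  rewrite <- !Series_scal_l, <- Series_plus.
  - apply Series_ext. intros; reflexivity.
  - apply (ex_series_scal_l c1 (fun k => snd (t k))); auto.
  - apply (ex_series_scal_l c2 (fun k => fst (t k))); auto.
Qed.

Lemma sum_fin_const (g : nat -> R) (m j : nat) :
  (forall i, (m < i)%nat -> g i = 0%R) -> sum_n g (m + j) = sum_n g m.
Proof.
  intros H. induction j as [|j IH]; [rewrite Nat.add_0_r; auto|].
  rewrite Nat.add_succ_r, sumR_S, IH, H by lia. lra.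
Qed.

Lemma is_series_fin (g : nat -> R) (m : nat) :
  (forall i, (m < i)%nat -> g i = 0%R) -> is_series g (sum_n g m).
Proof.
  intros H. assert (Hl : is_lim_seq (sum_n g) (sum_n g m)); [|exact Hl].
  apply (is_lim_seq_ext_loc (fun _ => sum_n g m)); [|apply is_lim_seq_const].
  exists m. intros N HN. replace N with (m + (N - m))%nat by lia. symmetry; apply sum_fin_const; auto.
Qed.

Lemma rhs_hyp_zero (a b : list C) (e f y : C) (m i : nat) :
  (m < i)%nat -> hyp_term (rhs_num a e f m) (rhs_den b e m) y i = 0.
Proof.
  intros H. unfold hyp_term, rhs_num. cbn [poch_prod fold_right].
  rewrite poch_negm_zero by auto. unfold Cdiv. ring.
Qed.

Section Comp.
Variable pr : C -> R.
Hypothesis Hpr_bound : forall z, Rabs (pr z) <= Cmod z.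
Hypothesis Hpr_mul : forall c t, ex_series (fun k => Re (t k)) -> ex_series (fun k => Im (t k)) ->
  pr (c * CSeries t) = Series (fun k => pr (c * t k)).

Lemma ex_pr (t : nat -> C) (q : C -> R) : (forall z, Rabs (q z) <= Cmod z) ->
  ex_series (fun k => Cmod (t k)) -> ex_series (fun k => q (t k)).
Proof.
  intros Hq H. apply (ex_series_le (fun k => q (t k)) (fun k => Cmod (t k))); [|exact H].
  intros; rewrite normR; auto.
Qed.

Lemma comp_eq (a b : list C) (d e f x y : C) :
  (forall n : nat, poch_prod b n <> 0) ->
  (forall k : nat, poch (f + 1) k <> 0) ->
  (forall k : nat, poch e k <> 0) ->
  (forall n k : nat, (k <= n)%nat -> poch (-1 - e - RtoC (INR n)) k <> 0) ->
  (forall n : nat, ex_series (fun k => Cmod (hyp_term (lhs_num d e n) (lhs_den e f) x k))) ->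
  (forall n : nat, ex_series (fun k => Cmod (lhs_double a b d e f x y n k))) ->
  ex_series (fun n => Series (fun k => Cmod (lhs_double a b d e f x y n k))) ->
  Series (fun n => pr (lhs_term a b d e f x y n)) = Series (fun n => pr (rhs_term a b d e f x y n)).
Proof.
  intros Hb Hf He Hq H5 H8 H9.
  set (T := lhs_double a b d e f x y).
  assert (E1 : forall n, pr (lhs_term a b d e f x y n) = Series (fun k => pr (T n k))).
  { intros n. unfold lhs_term, hypF. rewrite Hpr_mul.
    - reflexivity.
    - apply ex_pr; [apply re_le_Cmod|apply H5].
    - apply ex_pr; [apply im_le_Cmod|apply H5]. }
  rewrite (Series_ext _ _ E1).
  rewrite (diag_gen (fun n k => pr (T n k))).
  - apply Series_ext. intros m.
    unfold rhs_term. fold (rcoef d e f x m). unfold hypF.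
    set (u := hyp_term (rhs_num a e f m) (rhs_den b e m) y).
    assert (Hu0 : forall i, (m < i)%nat -> u i = 0) by (intros; apply rhs_hyp_zero; auto).
    assert (Hfin : forall q : C -> R, q 0 = 0%R -> ex_series (fun k => q (u k))).
    { intros q Hq0. exists (sum_n (fun k => q (u k)) m). apply is_series_fin.
      intros i Hi. rewrite Hu0 by auto. auto. }
    rewrite Hpr_mul by (apply Hfin; reflexivity).
    rewrite (sum_n_ext_loc (fun i => pr (T i (m - i)%nat)) (fun i => pr (rcoef d e f x m * u i))).
    + symmetry. apply is_series_unique. apply is_series_fin.
      intros i Hi. rewrite Hu0 by auto. rewrite Cmult_0_r.
      specialize (Hpr_bound 0). rewrite Cmod_0 in Hpr_bound.
      assert (Habs := Rabs_pos (pr 0)). apply Rabs_eq_0. lra.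
    + intros i Hi. f_equal. unfold T, u.
      assert (Hm : (i + (m - i))%nat = m) by lia.
      rewrite term_id.
      * rewrite Hm. reflexivity.
      * apply Hb.
      * apply Hf.
      * apply He.
      * rewrite Hm. apply Hq. lia.
  - intros n. apply (ex_pr (T n) (fun z => Rabs (pr z))); [|apply H8].
    intros z. rewrite Rabs_Rabsolu. auto.
  - apply (ex_series_le (fun n => Series (fun k => Rabs (pr (T n k)))) (fun n => Series (fun k => Cmod (T n k)))); [|apply H9].
    intros n. rewrite normR. rewrite Rabs_pos_eq.
    + apply Series_le; [intros; split; [apply Rabs_pos| apply Hpr_bound]| apply H8].
    + apply Series_nonneg; [intros; apply Rabs_pos|].
      apply (ex_pr (T n) (fun z => Rabs (pr z))); [|apply H8]. intros z. rewrite Rabs_Rabsolu. auto.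
Qed.
End Comp.

Theorem mainTheorem8 (a b : list C) (d e f x y : C) :
  (* all terms are defined: no vanishing denominators *)
  (forall n : nat, poch_prod b n <> 0) ->
  (forall k : nat, poch (f + 1) k <> 0) ->
  (forall k : nat, poch e k <> 0) ->
  (forall n k : nat, (k <= n)%nat -> poch (-1 - e - RtoC (INR n)) k <> 0) ->
  (* all series involved converge (absolutely) *)
  (forall n : nat, ex_series (fun k => Cmod (hyp_term (lhs_num d e n) (lhs_den e f) x k))) ->
  ex_series (fun n => Cmod (lhs_term a b d e f x y n)) ->
  ex_series (fun n => Cmod (rhs_term a b d e f x y n)) ->
  (forall n : nat, ex_series (fun k => Cmod (lhs_double a b d e f x y n k))) ->
  ex_series (fun n => Series (fun k => Cmod (lhs_double a b d e f x y n k))) ->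
  CSeries (lhs_term a b d e f x y) = CSeries (rhs_term a b d e f x y).
Proof.
  intros Hb Hf He Hq H5 H6 H7 H8 H9.
  unfold CSeries. f_equal.
  - apply (comp_eq Re re_le_Cmod CS_mul_re); assumption.
  - apply (comp_eq Im im_le_Cmod CS_mul_im); assumption.
Qed.
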